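(* Let $k\ge 1$ and $m\ge 0$ be integers. Let $K$ be the set of all odd integers in the closed interval $[1,6k-1]$, and let $$T=\bigcup_{j=0}^{m}5^jK,\qquad\text{where } cU=\{cu:\ u\in U\}.$$ Then $|T|=3k(m+1)-m\lfloor(3k+2)/5\rfloor$. *)

(* Defs.v *)
From mathcomp Require Import all_boot all_order.
From mathcomp Require Import finmap.
Set Implicit Arguments. Unset Strict Implicit. Unset Printing Implicit Defensive.
Local Open Scope fset_scope.

Definition Kset (k : nat) : {fset nat} :=
  [fset x | x in iota 1 (6 * k - 1) & odd x].

Definition scale_fset (c : nat) (U : {fset nat}) : {fset nat} :=
  [fset c * u | u in U].

Definition Tset (k m : nat) : {fset nat} :=
  (\bigcup_(j <- iota 0 m.+1) scale_fset (5 ^ j) (Kset k))%fset.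

(* Main.v *)
Require Import Defs.
From mathcomp Require Import all_boot all_order.
From mathcomp Require Import finmap.
From mathcomp Require Import zify.
Local Open Scope fset_scope.

Definition Oset (n : nat) : {fset nat} := [fset y | y in iota 1 n & odd y].

Lemma memO n x : (x \in Oset n) = odd x && (0 < x <= n).
Proof.
rewrite inE /= unfold_in /=.
have -> : (x \in [eta mem_seq (iota 1 n)]) = (x \in iota 1 n) by [].
by rewrite mem_iota add1n ltnS andbC.
Qed.

Lemma count_odd n : count odd (iota 1 n) = n.+1 %/ 2.
Proof.
elim: n => [//|n IH].
have -> : iota 1 n.+1 = iota 1 n ++ [:: n.+1].
  by rewrite -(addn1 n) iotaD addn1.
rewrite count_cat IH /= addn0.
have := odd_double_half n. rewrite -!divn2 -muln2.
case: (odd n) => /= e; lia.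
Qed.

Lemma cardO n : #|` Oset n| = n.+1 %/ 2.
Proof.
by rewrite card_imfset //= undup_id ?iota_uniq // size_filter count_odd.
Qed.

Lemma card_scale c U : 0 < c -> #|` scale_fset c U| = #|` U|.
Proof.
move=> c0; apply/eqP/card_in_imfsetP => x y _ _ /eqP.
by rewrite eqn_pmul2l // => /eqP.
Qed.

Lemma memS c U x : reflect (exists2 u, u \in U & x = c * u) (x \in scale_fset c U).
Proof. exact: imfsetP. Qed.

Lemma memT k m x :
  reflect (exists j, exists2 u, (j <= m) && (u \in Kset k) & x = 5 ^ j * u)
          (x \in Tset k m).
Proof.
rewrite /Tset; apply: (iffP (bigfcupP _ _ _ _)).
  move=> [j]; rewrite andbT mem_iota add0n ltnS /= => hj /memS [u hu ->].
  by exists j, u; rewrite ?hj.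
move=> [j [u /andP [hj hu] ->]]; exists j.
  by rewrite andbT mem_iota add0n ltnS.
by apply/memS; exists u.
Qed.

Lemma Trec k m : Tset k m.+1 = Tset k m `|` scale_fset (5 ^ m.+1) (Kset k).
Proof. by rewrite /Tset -(addn1 m.+1) iotaD big_cat /= big_seq1. Qed.

Lemma Tinter k m :
  Tset k m `&` scale_fset (5 ^ m.+1) (Kset k) =
  scale_fset (5 ^ m.+1) (Oset ((6 * k - 1) %/ 5)).
Proof.
apply/fsetP => x; rewrite inE; apply/andP/idP.
  move=> [/memT [j [u /andP [hj hu] ->]] /memS [v hv e]].
  apply/memS; exists v => //.
  move: hu hv; rewrite !memO => /andP [ou /andP [u0 ule]] /andP [ov /andP [v0 vle]].
  rewrite ov v0 /= leq_divRL //.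
  have ee : 5 ^ m.+1 = 5 ^ j * 5 ^ (m.+1 - j) by rewrite -expnD subnKC // ltnW.
  move: e; rewrite ee -mulnA => /eqP; rewrite eqn_pmul2l ?expn_gt0 // => /eqP eu.
  apply: leq_trans ule; rewrite eu mulnC leq_mul2r; apply/orP; right.
  have : 5 ^ 1 <= 5 ^ (m.+1 - j) by rewrite leq_pexp2l // subn_gt0.
  by [].
move=> /memS [v hv ->]; move: hv; rewrite memO => /andP [ov /andP [v0 vle]].
have v5 : v * 5 <= 6 * k - 1 by rewrite -leq_divRL.
split.
  apply/memT; exists m, (5 * v).
    by rewrite leqnn /= memO oddM ov /=; lia.
  by rewrite expnS mulnCA mulnA.
apply/memS; exists v => //; rewrite memO ov v0 /=; lia.
Qed.

Theorem lemma2p3 (k m : nat) : 1 <= k ->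
  #|` Tset k m| = 3 * k * (m + 1) - m * ((3 * k + 2) %/ 5).
Proof.
move=> k1.
have cK : #|` Kset k| = 3 * k by rewrite (cardO (6 * k - 1)); lia.
have cq : #|` Oset ((6 * k - 1) %/ 5)| = (3 * k + 2) %/ 5 by rewrite cardO; lia.
have qle : (3 * k + 2) %/ 5 <= 3 * k by lia.
elim: m => [|m IH].
  rewrite /Tset /= big_seq1 card_scale // cK; lia.
rewrite Trec cardfsU Tinter !card_scale ?expn_gt0 // IH cK cq.
nia.
Qed.
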